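(* Let $\mathbb{X},\mathbb{Y}$ be finite-dimensional real Hilbert spaces, $f:\mathbb{X}\to(-\infty,\infty]$ and $g:\mathbb{Y}\to(-\infty,\infty]$ proper, convex and lower semicontinuous, $K:\mathbb{X}\to\mathbb{Y}$ linear, and $h:\mathbb{X}\to\mathbb{R}$ convex and differentiable with $\bar L$-Lipschitz gradient. Assume (A1) below holds. Let $(\bar x,\bar w,\bar y)\in\mathbf{\Omega}$ and let $\{(z_n,x_n,w_n,y_n,\tau_n)\}$ be generated by the P-GRPDA algorithm described in the context. Then for any $y\in\mathbb{Y}$ there exists a natural number $n_2$ such that for all $n\ge n_2$, $$2\tau_n\mathbb{J}(x_n,w_n,y)+\frac{\psi}{\psi-1}\|\bar x-z_{n+2}\|^2+\frac1\beta\|y-y_n\|^2+\mu'\|x_n-x_{n+1}\|^2\le \frac{\psi}{\psi-1}\|\bar x-z_{n+1}\|^2+\frac1\beta\|y-y_{n-1}\|^2+\mu'\|x_n-x_{n-1}\|^2-\psi\bar\theta_n\|x_n-z_{n+1}\|^2,$$ where $\bar\theta_n=\tau_n/\tau_{n-1}$.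
   Context: $\phi=\frac{1+\sqrt5}{2}$; $K^*$ adjoint of $K$; $g^*$ Fenchel conjugate of $g$; $\operatorname{prox}_{\lambda f}(x)=\arg\min_{u}\{f(u)+\frac{1}{2\lambda}\|u-x\|^2\}$. (A1): the saddle point problem $\min_{x}\max_{y}\mathbb{L}(x,y):=f(x)+h(x)+\langle Kx,y\rangle-g^*(y)$ has a nonempty solution set, and $0\in\operatorname{ri}(K(\operatorname{dom}f)-\operatorname{dom}g)$ (ri = relative interior). (The paper also assumes the proximal maps of $f,g$ are efficiently computable.) $\Phi(x,w):=f(x)+h(x)+g(w)$; $\mathbf{\Omega}:=\{(\bar x,\bar w,\bar y)\in\mathbb{X}\times\mathbb{Y}\times\mathbb{Y}: -K^*\bar y\in\partial f(\bar x)+\nabla h(\bar x),\ \bar y\in\partial g(\bar w),\ K\bar x=\bar w\}$; for the fixed $(\bar x,\bar w,\bar y)\in\mathbf{\Omega}$, $\mathbb{J}(x,w,y):=\Phi(x,w)+\langle y,Kx-w\rangle-\Phi(\bar x,\bar w)$. P-GRPDA: choose $x_0\in\mathbb{X}$, $y_0\in\mathbb{Y}$, set $z_0=x_0$, choose $\beta>0$, $\psi\in(1,\phi]$, $0<2\mu'<\mu<\psi/2$, $\tau_0>0$. For $n=1,2,\dots$: $z_n=\frac{\psi-1}{\psi}x_{n-1}+\frac1\psi z_{n-1}$; $x_n=\operatorname{prox}_{\tau_{n-1}f}\big(z_n-\tau_{n-1}K^*y_{n-1}-\tau_{n-1}\nabla h(x_{n-1})\big)$; $\tau_n=\min\left\{\tau_{n-1},\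 \frac{\mu\|x_n-x_{n-1}\|}{\sqrt\beta\|Kx_n-Kx_{n-1}\|},\ \frac{\mu'\|x_n-x_{n-1}\|}{\|\nabla h(x_n)-\nabla h(x_{n-1})\|}\right\}$, $\sigma_n=\beta\tau_n$; $w_n=\operatorname{prox}_{\frac{1}{\sigma_n}g}\big(\frac{y_{n-1}}{\sigma_n}+Kx_n\big)$; $y_n=y_{n-1}+\sigma_n(Kx_n-w_n)$. Conventions in the $\tau_n$ update: $1/0=\infty$ (a term with zero denominator and nonzero numerator is ignored) and $0/0=\infty$ (so $\tau_n=\tau_{n-1}$ if $x_n=x_{n-1}$). *)

(* Defs.v *)
(* X = R^n, Y = R^m as row vectors 'rV[R]_n with the
   standard Euclidean inner product. *)
From HB Require Import structures.
From mathcomp Require Import all_boot all_order all_algebra.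
From mathcomp Require Import all_classical all_reals all_analysis.
Set Implicit Arguments. Unset Strict Implicit. Unset Printing Implicit Defensive.
Import Order.TTheory GRing.Theory Num.Theory.
Import numFieldNormedType.Exports.
Local Open Scope ring_scope.
Local Open Scope classical_set_scope.

Section Defs.
Variable R : realType.

Definition ip {n : nat} (u v : 'rV[R]_n) : R := (u *m v^T) 0 0.
Definition enorm {n : nat} (u : 'rV[R]_n) : R := Num.sqrt (ip u u).

Definition appK {n m : nat} (K : 'M[R]_(n, m)) (x : 'rV[R]_n) : 'rV[R]_m := x *m K.
Definition adjK {n m : nat} (K : 'M[R]_(n, m)) (y : 'rV[R]_m) : 'rV[R]_n := y *m K^T.

Definition phi_gold : R := (1 + Num.sqrt 5) / 2.

Definition dom {n : nat} (f : 'rV[R]_n -> \bar R) : set 'rV[R]_n :=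
  [set x | (f x < +oo)%E].

Definition proper_fun {n : nat} (f : 'rV[R]_n -> \bar R) : Prop :=
  (exists x, (f x < +oo)%E) /\ (forall x, (-oo < f x)%E).

Definition convex_efun {n : nat} (f : 'rV[R]_n -> \bar R) : Prop :=
  forall x y (t : R), 0 < t < 1 ->
    (f (t *: x + (1 - t) *: y)%R <= t%:E * f x + (1 - t)%:E * f y)%E.

Definition convex_rfun {n : nat} (h : 'rV[R]_n -> R) : Prop :=
  forall x y (t : R), 0 < t < 1 ->
    h (t *: x + (1 - t) *: y) <= t * h x + (1 - t) * h y.

Definition subdiff {n : nat} (f : 'rV[R]_n -> \bar R) (x v : 'rV[R]_n) : Prop :=
  (f x < +oo)%E /\ forall u, (f x + (ip v (u - x)%R)%:E <= f u)%E.

Definition conj_fun {n : nat} (g : 'rV[R]_n -> \bar R) (y : 'rV[R]_n) : \bar R :=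
  ereal_sup [set ((ip y w)%:E - g w)%E | w in [set: 'rV[R]_n]].

Definition is_prox {n : nat} (lam : R) (f : 'rV[R]_n -> \bar R) (v u : 'rV[R]_n) : Prop :=
  forall u', (f u + ((2 * lam)^-1 * enorm (u - v) ^+ 2)%R%:E
              <= f u' + ((2 * lam)^-1 * enorm (u' - v) ^+ 2)%R%:E)%E.

Definition aff_hull {n : nat} (S : set 'rV[R]_n) : set 'rV[R]_n :=
  [set x | exists (k : nat) (p : 'I_k -> 'rV[R]_n) (c : 'I_k -> R),
     (forall i, S (p i)) /\ \sum_(i < k) c i = 1 /\ x = \sum_(i < k) c i *: p i].

Definition rel_int {n : nat} (S : set 'rV[R]_n) : set 'rV[R]_n :=
  [set x | aff_hull S x /\ exists2 e : R, 0 < e &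
     forall y, aff_hull S y -> enorm (y - x) < e -> S y].

(* Lagrangian L(x,y) = f x + h x + <Kx,y> - g^*(y) and its saddle points
   (solutions of min_x max_y L); L is finite on dom f x dom g^* *)
Definition lagr {n m : nat} (f : 'rV[R]_n -> \bar R) (h : 'rV[R]_n -> R)
  (K : 'M[R]_(n, m)) (g : 'rV[R]_m -> \bar R) x y : \bar R :=
  (f x + (h x)%:E + (ip (appK K x) y)%:E - conj_fun g y)%E.

Definition saddle_point {n m : nat} (f : 'rV[R]_n -> \bar R) (h : 'rV[R]_n -> R)
  (K : 'M[R]_(n, m)) (g : 'rV[R]_m -> \bar R) (xs : 'rV[R]_n) (ys : 'rV[R]_m) : Prop :=
  dom f xs /\ dom (conj_fun g) ys /\
  forall x y, dom f x -> dom (conj_fun g) y ->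
    (lagr f h K g xs y <= lagr f h K g xs ys)%E /\
    (lagr f h K g xs ys <= lagr f h K g x ys)%E.

Definition assumption_A1 {n m : nat} (f : 'rV[R]_n -> \bar R) (h : 'rV[R]_n -> R)
  (K : 'M[R]_(n, m)) (g : 'rV[R]_m -> \bar R) : Prop :=
  (exists xs ys, saddle_point f h K g xs ys) /\
  rel_int [set appK K x - w | x in dom f & w in dom g] 0.

Definition Omega {n m : nat} (f : 'rV[R]_n -> \bar R) (gh : 'rV[R]_n -> 'rV[R]_n)
  (K : 'M[R]_(n, m)) (g : 'rV[R]_m -> \bar R)
  (xb : 'rV[R]_n) (wb yb : 'rV[R]_m) : Prop :=
  (exists2 v, subdiff f xb v & - adjK K yb = v + gh xb) /\
  subdiff g wb yb /\ appK K xb = wb.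

Definition Phi {n m : nat} (f : 'rV[R]_n -> \bar R) (h : 'rV[R]_n -> R)
  (g : 'rV[R]_m -> \bar R) x w : \bar R := (f x + (h x)%:E + g w)%E.

Definition Jfun {n m : nat} (f : 'rV[R]_n -> \bar R) (h : 'rV[R]_n -> R)
  (K : 'M[R]_(n, m)) (g : 'rV[R]_m -> \bar R) (xb : 'rV[R]_n) (wb : 'rV[R]_m)
  x w y : \bar R :=
  (Phi f h g x w + (ip y (appK K x - w)%R)%:E - Phi f h g xb wb)%E.

(* a/b with the conventions 1/0 = 0/0 = +oo: a term with zero denominator is
   replaced by [dflt] (= tau_{n-1}, which does not change the min) *)
Definition ratio_or (dflt a b : R) : R := if b == 0 then dflt else a / b.

Definition pgrpda {n m : nat} (f : 'rV[R]_n -> \bar R) (h : 'rV[R]_n -> R)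
  (gh : 'rV[R]_n -> 'rV[R]_n) (K : 'M[R]_(n, m)) (g : 'rV[R]_m -> \bar R)
  (beta psi mu mu' : R)
  (z x : nat -> 'rV[R]_n) (w y : nat -> 'rV[R]_m) (tau : nat -> R) : Prop :=
  z 0%N = x 0%N /\ 0 < tau 0%N /\
  forall k : nat, (1 <= k)%N ->
    [/\ z k = ((psi - 1) / psi) *: x k.-1 + psi^-1 *: z k.-1,
        is_prox (tau k.-1) f
          (z k - tau k.-1 *: adjK K (y k.-1) - tau k.-1 *: gh (x k.-1)) (x k),
        tau k = Num.min (tau k.-1)
                  (Num.min
                    (ratio_or (tau k.-1) (mu * enorm (x k - x k.-1))
                       (Num.sqrt beta * enorm (appK K (x k) - appK K (x k.-1))))
                    (ratio_or (tau k.-1) (mu' * enorm (x k - x k.-1))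
                       (enorm (gh (x k) - gh (x k.-1))))),
        is_prox (beta * tau k)^-1 g ((beta * tau k)^-1 *: y k.-1 + appK K (x k)) (w k)
      & y k = y k.-1 + (beta * tau k) *: (appK K (x k) - w k)].

End Defs.

(* Main.v *)
Require Import Defs.
From HB Require Import structures.
From mathcomp Require Import all_boot all_order all_algebra.
From mathcomp Require Import all_classical all_reals all_analysis.
From mathcomp Require Import ring lra.
Set Implicit Arguments. Unset Strict Implicit. Unset Printing Implicit Defensive.
Import Order.TTheory GRing.Theory Num.Theory.
Import numFieldNormedType.Exports.
Local Open Scope ring_scope.
Local Open Scope classical_set_scope.


Lemma ipE (R : realType) k (u v : 'rV[R]_k) : ip u v = \sum_i u 0 i * v 0 i.
Proof. by rewrite /ip !mxE; apply: eq_bigr => i _; rewrite mxE. Qed.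

Lemma ipC (R : realType) k (u v : 'rV[R]_k) : ip u v = ip v u.
Proof. by rewrite !ipE; apply: eq_bigr => i _; rewrite mulrC. Qed.

Lemma ipDl (R : realType) k (u v w : 'rV[R]_k) : ip (u + v) w = ip u w + ip v w.
Proof. by rewrite !ipE -big_split; apply: eq_bigr => i _; rewrite mxE mulrDl. Qed.

Lemma ipNl (R : realType) k (u w : 'rV[R]_k) : ip (- u) w = - ip u w.
Proof. by rewrite !ipE -sumrN; apply: eq_bigr => i _; rewrite mxE mulNr. Qed.

Lemma ipZl (R : realType) k (a : R) (u w : 'rV[R]_k) : ip (a *: u) w = a * ip u w.
Proof. by rewrite !ipE mulr_sumr; apply: eq_bigr => i _; rewrite mxE mulrA. Qed.

Lemma ipDr (R : realType) k (u v w : 'rV[R]_k) : ip w (u + v) = ip w u + ip w v.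
Proof. by rewrite ipC ipDl !(ipC w). Qed.

Lemma ipNr (R : realType) k (u w : 'rV[R]_k) : ip w (- u) = - ip w u.
Proof. by rewrite ipC ipNl ipC. Qed.

Lemma ipZr (R : realType) k (a : R) (u w : 'rV[R]_k) : ip w (a *: u) = a * ip w u.
Proof. by rewrite ipC ipZl ipC. Qed.

Lemma ip_ge0 (R : realType) k (u : 'rV[R]_k) : 0 <= ip u u.
Proof. by rewrite ipE; apply: sumr_ge0 => i _; rewrite -expr2 sqr_ge0. Qed.

Lemma enorm2 (R : realType) k (u : 'rV[R]_k) : enorm u ^+ 2 = ip u u.
Proof. by rewrite /enorm sqr_sqrtr // ip_ge0. Qed.

Lemma enorm_ge0 (R : realType) k (u : 'rV[R]_k) : 0 <= enorm u.
Proof. by rewrite /enorm sqrtr_ge0. Qed.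

Lemma ip_adj (R : realType) k l (K : 'M[R]_(k, l)) x y :
  ip (adjK K y) x = ip y (appK K x).
Proof. by rewrite /ip /adjK /appK trmx_mul mulmxA. Qed.

Lemma appKD (R : realType) k l (K : 'M[R]_(k, l)) a b :
  appK K (a + b) = appK K a + appK K b.
Proof. by rewrite /appK mulmxDl. Qed.
Lemma appKN (R : realType) k l (K : 'M[R]_(k, l)) a :
  appK K (- a) = - appK K a.
Proof. by rewrite /appK mulNmx. Qed.
Lemma appKZ (R : realType) k l (K : 'M[R]_(k, l)) (c : R) a :
  appK K (c *: a) = c *: appK K a.
Proof. by rewrite /appK scalemxAl. Qed.

Lemma cauchy_schwarz (R : realType) k (u v : 'rV[R]_k) :
  ip u v <= enorm u * enorm v.
Proof.
set a := ip u u; set b := ip v v; set c := ip u v.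
have H t : 0 <= a - 2 * t * c + t ^+ 2 * b.
  have := ip_ge0 (u - t *: v).
  rewrite !(ipDl, ipDr, ipNl, ipNr, ipZl, ipZr) (ipC v u) -/a -/b -/c.
  move=> h; lra.
have ha : 0 <= a by apply: ip_ge0.
have hb : 0 <= b by apply: ip_ge0.
case: (lerP c 0) => hc.
  by apply: le_trans hc _; rewrite mulr_ge0 // enorm_ge0.
have hc2 : c ^+ 2 <= a * b.
  case: (eqVneq b 0) => hb0.
    have := H ((a + 1) / (2 * c)).
    have -> : 2 * ((a + 1) / (2 * c)) * c = a + 1.
      by field; rewrite gt_eqF.
    rewrite hb0 mulr0 addr0 => h; lra.
  have hbp : 0 < b by rewrite lt_def hb0 hb.
  have := H (c / b).
  have -> : a - 2 * (c / b) * c + (c / b) ^+ 2 * b = a - c ^+ 2 / b.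
    by field; rewrite hb0.
  rewrite subr_ge0 ler_pdivrMr // => h; by rewrite mulrC.
rewrite /enorm -sqrtrM // -[c]gtr0_norm // -sqrtr_sqr.
by rewrite ler_sqrt // mulr_ge0.
Qed.

Lemma le_lim_t (R : realType) (A B C : R) :
  (forall t, 0 < t < 1 -> A <= B + t * C) -> A <= B.
Proof.
move=> H; apply/ler_addgt0Pr => e he.
set t := Num.min (2^-1) (e / (`|C| + 1)).
have ht0 : 0 < t by rewrite lt_min invr_gt0 ltr0n divr_gt0 // ltr_wpDl.
have ht1 : t < 1 by rewrite gt_min; apply/orP; left; rewrite invf_lt1 // ltr1n.
apply: (le_trans (H t _)); first by rewrite ht0 ht1.
rewrite lerD2l.
have h1 : t * C <= t * `|C| by apply: ler_wpM2l; [exact: ltW | exact: ler_norm].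
apply: le_trans h1 _.
have h2 : t <= e / (`|C| + 1) by rewrite ge_min lexx orbT.
have hC : 0 <= `|C| by [].
have h3 : t * `|C| <= e / (`|C| + 1) * `|C| by apply: ler_wpM2r.
apply: le_trans h3 _.
rewrite mulrAC ler_pdivrMr ?ltr_wpDl //; nra.
Qed.

Lemma ip_expand (R : realType) k (a b : 'rV[R]_k) (t : R) :
  ip (a + t *: b) (a + t *: b) = ip a a + 2 * t * ip a b + t ^+ 2 * ip b b.
Proof. rewrite ipDl !ipDr !ipZl !ipZr (ipC b a); ring. Qed.

Lemma prox_ineq (R : realType) k (lam : R) (f : 'rV[R]_k -> \bar R) v u :
  0 < lam -> proper_fun f -> convex_efun f -> is_prox lam f v u ->
  exists r, f u = r%:E /\
    forall x X, f x = X%:E -> lam * (r - X) <= ip (u - v) (x - u).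
Proof.
move=> hlam [[x0 hx0] hninf] hconv hprox.
have hfu : (f u < +oo)%E.
  have := hprox x0.
  move: hx0 (hninf x0); case: (f x0) => [s0| |] // _ _.
  move: (f u) => fu; case: fu => [r0| |] // _; exact: ltry.
have [r fur] : exists r0, f u = r0%:E.
  move: hfu (hninf u); case: (f u) => [r0| |] // _ _; by exists r0.
exists r; split => // x X fxX.
set P := ip (u - v) (x - u).
set Q := ip (x - u) (x - u).
have key t : 0 < t < 1 -> t * (r - X) <= (2 * lam)^-1 * (2 * t * P + t ^+ 2 * Q).
  move=> /andP[t0 t1].
  set u' := t *: x + (1 - t) *: u.
  have hc := hconv x u t; rewrite t0 t1 /= in hc; have {}hc := hc isT.
  rewrite fxX fur -!EFinM -EFinD -/u' in hc.
  have [s fus] : exists s0, f u' = s0%:E.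
    move: hc (hninf u'); case: (f u') => [s0| |] // _ _; by exists s0.
  rewrite fus lee_fin in hc.
  have hp := hprox u'; rewrite fur fus -!EFinD lee_fin !enorm2 in hp.
  have e1 : u' - v = (u - v) + t *: (x - u).
    by apply/rowP => i; rewrite !mxE; ring.
  rewrite e1 in hp.
  rewrite ip_expand -/P -/Q in hp.
  lra.
have : r - X <= lam^-1 * P.
  apply: (@le_lim_t _ _ _ ((2 * lam)^-1 * Q)) => t ht; have h := key t ht.
  case/andP: ht => t0 _.
  rewrite -(ler_pM2l t0).
  have -> : t * (lam^-1 * P + t * ((2 * lam)^-1 * Q)) =
      (2 * lam)^-1 * (2 * t * P + t ^+ 2 * Q).
    by field; rewrite gt_eqF.
  by [].
by rewrite -(ler_pM2l hlam) mulrA mulfV ?gt_eqF // mul1r.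
Qed.

Lemma grad_ineq (R : realType) k (h : 'rV[R]_k -> R) (gh : 'rV[R]_k -> 'rV[R]_k) :
  convex_rfun h -> (forall x, differentiable h x) ->
  (forall x v, 'd h x v = ip (gh x) v) ->
  forall x y, ip (gh x) (y - x) <= h y - h x.
Proof.
move=> hconv hdiff hgrad x y.
set v := y - x.
rewrite -hgrad -deriveE //.
have hd : derivable h x v by apply: diff_derivable.
set g := (fun t : R => t^-1 *: ((h \o shift x) (t *: v) - h x)).
have hc : g @ 0^' --> 'D_v h x by apply: hd.
have hcr : g @ 0^'+ --> 'D_v h x.
  move=> A /hc /nbhs_ballP [_ /posnumP[e] xe_A]; exists e%:num => //= z xe_z.
  by rewrite lt_def => /andP [xnez _]; apply: xe_A.
apply: (cvgr_to_le hcr).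
near=> t.
have t0 : 0 < t by near: t; exact: nbhs_right_gt.
have t1 : t < 1 by near: t; apply: nbhs_right_lt; exact: ltr01.
rewrite /g /=.
have -> : t *: v + x = t *: y + (1 - t) *: x.
  by apply/rowP => i; rewrite !mxE; ring.
have := hconv y x t; rewrite t0 t1 => /(_ isT) hc2.
rewrite -[_ *: _]/(_ * _) ler_pdivrMl //.
lra.
Unshelve. all: by end_near.
Qed.

Lemma enormN (R : realType) k (u : 'rV[R]_k) : enorm (- u) = enorm u.
Proof. by rewrite /enorm ipNl ipNr opprK. Qed.

Lemma enormB (R : realType) k (u v : 'rV[R]_k) : enorm (u - v) = enorm (v - u).
Proof. by rewrite -enormN opprB. Qed.

Lemma cs_abs (R : realType) k (u v : 'rV[R]_k) :
  `|ip u v| <= enorm u * enorm v.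
Proof.
have h1 := cauchy_schwarz u v.
have h2 := cauchy_schwarz (- u) v.
rewrite ipNl enormN in h2.
by rewrite ler_norml h1 lerNl h2.
Qed.

Lemma cs_sq (R : realType) k (u v : 'rV[R]_k) :
  ip u v ^+ 2 <= ip u u * ip v v.
Proof.
rewrite -!enorm2 -exprMn -real_normK ?num_real //.
by rewrite lerXn2r ?nnegrE ?mulr_ge0 ?enorm_ge0 // cs_abs.
Qed.

Lemma appK_bound (R : realType) k l (K : 'M[R]_(k, l)) :
  exists2 C, 0 <= C & forall u, enorm (appK K u) <= C * enorm u.
Proof.
set S := \sum_j ip (col j K)^T (col j K)^T.
have S0 : 0 <= S by apply: sumr_ge0 => j _; apply: ip_ge0.
exists (Num.sqrt S); first exact: sqrtr_ge0.
move=> u; rewrite /enorm -sqrtrM // ler_sqrt ?mulr_ge0 ?ip_ge0 //.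
have -> : ip (appK K u) (appK K u) = \sum_j ip u (col j K)^T ^+ 2.
  rewrite ipE; apply: eq_bigr => j _; rewrite expr2; congr (_ * _);
  by rewrite /appK ipE !mxE; apply: eq_bigr => i _; rewrite !mxE.
rewrite /S mulr_suml; apply: ler_sum => j _.
by rewrite mulrC; apply: cs_sq.
Qed.

Lemma ratio_lb (R : realType) (q M e d : R) :
  0 < q -> 0 < M -> 0 <= e -> 0 <= d -> d <= M * e -> d != 0 -> q / M <= (q * e) / d.
Proof.
move=> q0 M0 e0 d0 hd dn0.
have dp : 0 < d by rewrite lt_def dn0 d0.
rewrite ler_pdivlMr //.
have : q / M * d <= q / M * (M * e) by rewrite ler_wpM2l // divr_ge0 // ltW.
by rewrite mulrA divfK ?gt_eqF.
Qed.

Lemma ratio_or_lb (R : realType) (dflt q M e d : R) :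
  0 < q -> 0 < M -> 0 <= e -> 0 <= d -> d <= M * e ->
  Num.min dflt (q / M) <= ratio_or dflt (q * e) d.
Proof.
move=> q0 M0 e0 d0 hd; rewrite /ratio_or; case: eqP => hd0.
  by rewrite ge_min lexx.
by rewrite ge_min (ratio_lb q0 M0 e0 d0 hd) ?orbT //; apply/eqP.
Qed.

Lemma tau_mono (R : realType) (tau : nat -> R) :
  (forall k, (1 <= k)%N -> tau k <= tau k.-1) ->
  forall N i, (N <= i)%N -> tau i <= tau N.
Proof.
move=> hm N i; elim: i => [|i IH].
  by rewrite leqn0 => /eqP ->.
rewrite leq_eqVlt => /orP[/eqP -> //|].
rewrite ltnS => /IH h; apply: le_trans h; exact: (hm i.+1).
Qed.

Lemma tau_eventually (R : realType) (tau : nat -> R) (c : R) :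
  0 < c -> (forall k, c <= tau k) -> (forall k, (1 <= k)%N -> tau k <= tau k.-1) ->
  forall eps, 0 < eps -> exists N, forall i j, (N <= i)%N -> tau i <= (1 + eps) * tau j.
Proof.
move=> c0 hc hm eps e0.
set E := range tau.
have hlb : has_lbound E by exists c => _ [k _ <-].
have hne : E !=set0 by exists (tau 0%N), 0%N.
have hL : c <= inf E by apply: lb_le_inf => // _ [k _ <-].
have [_ [N _ <-] hN] := inf_adherent (mulr_gt0 e0 (lt_le_trans c0 hL)) (conj hne hlb).
exists N => i j hi.
have h1 := tau_mono hm hi.
have h2 : inf E <= tau j by apply: ge_inf => //; exists j.
have h3 : 0 <= inf E by apply: le_trans hL; apply: ltW.
nra.
Qed.

Lemma three_point (R : realType) k (a b c : 'rV[R]_k) :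
  2 * ip (a - b) (c - a) = ip (c - b) (c - b) - ip (c - a) (c - a) - ip (a - b) (a - b).
Proof.
have e1 : c - a = (c - b) + (-1) *: (a - b) by apply/rowP => i; rewrite !mxE; ring.
rewrite e1 ip_expand; move: (c - b) (a - b) => u w.
rewrite ipDr ipZr (ipC w u); ring.
Qed.

Lemma golden_id (R : realType) k (p : R) (a b c : 'rV[R]_k) : 1 < p ->
  2 * ip (a - b) (c - a) =
  p / (p - 1) * (ip (c - b) (c - b) -
     ip (c - ((p - 1) / p *: a + p^-1 *: b)) (c - ((p - 1) / p *: a + p^-1 *: b)))
  - (1 + p^-1) * ip (a - b) (a - b).
Proof.
move=> p1.
have p0 : p != 0 by rewrite gt_eqF // (lt_trans ltr01).
have p10 : p - 1 != 0 by rewrite subr_eq0 gt_eqF.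
have e1 : c - a = (c - b) + (-1) *: (a - b) by apply/rowP => i; rewrite !mxE; ring.
have e2 : c - ((p - 1) / p *: a + p^-1 *: b) = (c - b) + (- ((p - 1) / p)) *: (a - b).
  by apply/rowP => i; rewrite !mxE; field.
rewrite e1 e2 !ip_expand; move: (c - b) (a - b) => u w.
rewrite ipDr ipZr (ipC w u).
by field; rewrite p0 p10.
Qed.

Lemma ratio_bound (R : realType) (t d a b : R) :
  0 <= a -> t <= ratio_or d a b -> 0 <= b -> t * b <= a.
Proof.
move=> a0; rewrite /ratio_or; case: eqP => [-> _ _|hb0 ht hb]; first by rewrite mulr0.
have bp : 0 < b by rewrite lt_def hb; apply/andP; split => //; apply/eqP.
by rewrite -ler_pdivlMr.
Qed.

Lemma vec_split3 (R : realType) k (a b c d : 'rV[R]_k) (t : R) :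
  a - (b - t *: c - t *: d) = (a - b) + t *: c + t *: d.
Proof. by apply/rowP => i; rewrite !mxE; ring. Qed.

Lemma ip_split3 (R : realType) k (a c d w : 'rV[R]_k) (t : R) :
  ip (a + t *: c + t *: d) w = ip a w + t * ip c w + t * ip d w.
Proof. by rewrite !ipDl !ipZl. Qed.

Lemma min_mono3 (R : realType) (T c1 c2 R1 R2 : R) :
  Num.min T c1 <= R1 -> Num.min T c2 <= R2 ->
  Num.min T (Num.min c1 c2) <= Num.min T (Num.min R1 R2).
Proof.
move=> h1 h2; rewrite le_min ge_min lexx /= le_min; apply/andP; split.
  by apply: le_trans h1; rewrite minA ge_min lexx.
by apply: le_trans h2; rewrite (minC c1) minA ge_min lexx.
Qed.

Lemma min3_le2 (R : realType) (a b c : R) : Num.min a (Num.min b c) <= b.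
Proof. by rewrite ge_min ge_min lexx orbT. Qed.
Lemma min3_le3 (R : realType) (a b c : R) : Num.min a (Num.min b c) <= c.
Proof. by rewrite ge_min ge_min lexx !orbT. Qed.

Unset Implicit Arguments.
Set Strict Implicit.

Theorem lemma3p1 (R : realType) (n m : nat)
  (f : 'rV[R]_n -> \bar R) (g : 'rV[R]_m -> \bar R) (K : 'M[R]_(n, m))
  (h : 'rV[R]_n -> R) (gh : 'rV[R]_n -> 'rV[R]_n) (Lbar : R)
  (f_proper : proper_fun f) (f_convex : convex_efun f)
  (f_lsc : lower_semicontinuous f)
  (g_proper : proper_fun g) (g_convex : convex_efun g)
  (g_lsc : lower_semicontinuous g)
  (h_convex : convex_rfun h)
  (h_diff : forall x, differentiable h x)
  (h_grad : forall x v, 'd h x v = ip (gh x) v)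
  (h_lip : forall x x', enorm (gh x - gh x') <= Lbar * enorm (x - x'))
  (A1 : assumption_A1 f h K g)
  (xb : 'rV[R]_n) (wb yb : 'rV[R]_m) (hOmega : Omega f gh K g xb wb yb)
  (beta psi mu mu' : R)
  (hbeta : 0 < beta) (hpsi : 1 < psi <= phi_gold R)
  (hmu : 0 < 2 * mu' < mu) (hmu2 : mu < psi / 2)
  (z x : nat -> 'rV[R]_n) (w y : nat -> 'rV[R]_m) (tau : nat -> R)
  (halg : pgrpda f h gh K g beta psi mu mu' z x w y tau) :
  forall yy : 'rV[R]_m,
  exists2 n2 : nat, (1 <= n2)%N & forall k : nat, (n2 <= k)%N ->
    ((2 * tau k)%:E * Jfun f h K g xb wb (x k) (w k) yy
      + (psi / (psi - 1) * enorm (xb - z k.+2) ^+ 2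
         + beta^-1 * enorm (yy - y k) ^+ 2
         + mu' * enorm (x k - x k.+1) ^+ 2)%:E
     <= (psi / (psi - 1) * enorm (xb - z k.+1) ^+ 2
         + beta^-1 * enorm (yy - y k.-1) ^+ 2
         + mu' * enorm (x k - x k.-1) ^+ 2
         - psi * (tau k / tau k.-1) * enorm (x k - z k.+1) ^+ 2)%:E)%E.
Proof.
move=> yy.
case: halg => hz0 [htau0 hstep].
have [C C0 hC] := appK_bound K.
set sb := Num.sqrt beta.
have sb0 : 0 < sb by rewrite sqrtr_gt0.
have sb2 : sb ^+ 2 = beta by rewrite sqr_sqrtr // ltW.
case/andP: hmu => hmu'0 hmumu'.
have mu'0 : 0 < mu' by lra.
have mu0 : 0 < mu by lra.
case/andP: hpsi => hpsi1 hpsiphi.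
have psi0 : 0 < psi by lra.
set c1 := mu / (sb * (C + 1)).
set c2 := mu' / (`|Lbar| + 1).
have c10 : 0 < c1 by rewrite divr_gt0 // mulr_gt0 // ltr_wpDl.
have c20 : 0 < c2 by rewrite divr_gt0 // ltr_wpDl.
have hmono : forall k, (1 <= k)%N -> tau k <= tau k.-1.
  by move=> k hk; have [_ _ -> _ _] := hstep k hk; rewrite ge_min lexx.
have hlow : forall k, (1 <= k)%N -> Num.min (tau k.-1) (Num.min c1 c2) <= tau k.
  move=> k hk; have [_ _ -> _ _] := hstep k hk.
  set e := enorm (x k - x k.-1).
  have e0 : 0 <= e by apply: enorm_ge0.
  have r1 : Num.min (tau k.-1) c1 <=
      ratio_or (tau k.-1) (mu * e) (sb * enorm (appK K (x k) - appK K (x k.-1))).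
    apply: ratio_or_lb => //; first by rewrite mulr_gt0 // ltr_wpDl.
      by rewrite mulr_ge0 ?enorm_ge0 // ltW.
    rewrite -mulrA ler_pM2l //.
    have -> : appK K (x k) - appK K (x k.-1) = appK K (x k - x k.-1) by rewrite appKD appKN.
    apply: (le_trans (hC _)); rewrite ler_wpM2r // lerDl //.
  have r2 : Num.min (tau k.-1) c2 <=
      ratio_or (tau k.-1) (mu' * e) (enorm (gh (x k) - gh (x k.-1))).
    apply: ratio_or_lb => //; first by rewrite enorm_ge0.
    apply: (le_trans (h_lip _ _)); rewrite ler_wpM2r //.
    apply: (le_trans (ler_norm _)); rewrite lerDl //.
  exact: min_mono3.
set c := Num.min (tau 0%N) (Num.min c1 c2).
have c0 : 0 < c by rewrite !lt_min htau0 c10 c20.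
have hc : forall k, c <= tau k.
  elim=> [|k IH]; first by rewrite ge_min lexx.
  apply: le_trans (hlow k.+1 isT); rewrite le_min IH /= ge_min.
  by apply/orP; right; rewrite lexx.
have tpos : forall k, 0 < tau k by move=> k; exact: lt_le_trans c0 (hc k).
have s5 : Num.sqrt 5 ^+ 2 = 5 :> R by rewrite sqr_sqrtr.
have s50 : 0 <= Num.sqrt 5 :> R by apply: sqrtr_ge0.
have hpsi2 : psi ^+ 2 <= psi + 1.
  move: hpsiphi; rewrite /phi_gold => hp. nra.
have psi2 : psi < 2 by nra.
set d := psi - 2 * mu' - mu ^+ 2.
have d0 : 0 < d by rewrite /d; nra.
set eps := d / (7 * psi).
have eps0 : 0 < eps by rewrite divr_gt0 // mulr_gt0.
have eps1 : eps <= 1.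
  rewrite /eps ler_pdivrMr ?mulr_gt0 //; rewrite /d; nra.
have hfin : (1 + eps) * (2 * mu' + (1 + eps) ^+ 2 * mu ^+ 2) <= psi.
  have h1 : (1 + eps) * (2 * mu' + (1 + eps) ^+ 2 * mu ^+ 2)
            <= (1 + 7 * eps) * (2 * mu' + mu ^+ 2).
    have p2 : eps ^+ 2 <= eps by rewrite expr2 ler_piMl // ltW.
    have p3 : eps ^+ 3 <= eps ^+ 2 by rewrite exprS ler_piMl // sqr_ge0.
    have p4 : 0 <= mu ^+ 2 * (7 * eps - 3 * eps - 3 * eps ^+ 2 - eps ^+ 3).
      by apply: mulr_ge0; [exact: sqr_ge0 | lra].
    have p5 : 0 <= mu' * eps by rewrite mulr_ge0 // ltW.
    have -> : (1 + eps) * (2 * mu' + (1 + eps) ^+ 2 * mu ^+ 2) =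
       2 * mu' + 2 * (mu' * eps) + mu ^+ 2 * (1 + 3 * eps + 3 * eps ^+ 2 + eps ^+ 3) by ring.
    have -> : (1 + 7 * eps) * (2 * mu' + mu ^+ 2) =
       2 * mu' + 14 * (mu' * eps) + mu ^+ 2 * (1 + 7 * eps) by ring.
    lra.
  apply: le_trans h1 _.
  have h2 : 7 * eps * psi = d by rewrite /eps; field; rewrite gt_eqF.
  rewrite /d in h2 *; nra.
have [N hN] := tau_eventually c0 hc hmono eps0.
exists N.+1 => // k hk.
case: k hk => [//|j] hj.
have hNj : (N <= j)%N by [].
have [hzk hproxk htauk hproxw hyk] := hstep j.+1 isT.
have [hzk1 hproxk1 htauk1 _ _] := hstep j.+2 isT.
have [hzk2 _ _ _ _] := hstep j.+3 isT.
rewrite /= in hzk hproxk htauk hproxw hyk hzk1 hproxk1 htauk1 hzk2 *.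
set t0 := tau j in htauk hproxk hzk *.
set t1 := tau j.+1 in htauk hproxk1 htauk1 hproxw hyk *.
set t2 := tau j.+2 in htauk1 *.
have t00 : 0 < t0 := tpos j.
have t10 : 0 < t1 := tpos j.+1.
have t20 : 0 < t2 := tpos j.+2.
case: hOmega => [[v [hfxb _] hv] [[hgwb _] hKxb]].
have [Fb hFb] : exists r, f xb = r%:E.
  move: hfxb (f_proper.2 xb); case: (f xb) => [r0| |] // _ _; by exists r0.
have [Gb hGb] : exists r, g wb = r%:E.
  move: hgwb (g_proper.2 wb); case: (g wb) => [r0| |] // _ _; by exists r0.
have [F1 [hF1 P1]] := prox_ineq t10 f_proper f_convex hproxk1.
have [F0 [hF0 P2]] := prox_ineq t00 f_proper f_convex hproxk.
have bt0 : 0 < beta * t1 by rewrite mulr_gt0.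
have bti : 0 < (beta * t1)^-1 by rewrite invr_gt0.
have [G [hG P3]] := prox_ineq bti g_proper g_convex hproxw.
have Q1 := P1 xb Fb hFb.
rewrite vec_split3 ip_split3 ip_adj in Q1.
have Q2 := P2 (x j.+2) F1 hF1.
rewrite vec_split3 ip_split3 ip_adj in Q2.
have exz : x j.+1 - z j.+1 = psi *: (x j.+1 - z j.+2).
  by apply/rowP => i; rewrite hzk1 !mxE; field; rewrite gt_eqF.
rewrite exz ipZl in Q2.
have Q3 := P3 wb Gb hGb.
have ewy : w j.+1 - ((beta * t1)^-1 *: y j + appK K (x j.+1)) = (- (beta * t1)^-1) *: y j.+1.
  by apply/rowP => i; rewrite hyk !mxE; field; rewrite !gt_eqF.
rewrite ewy ipZl in Q3.
have Q3' : t1 * (G - Gb) <= t1 * ip (y j.+1) (w j.+1 - wb).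
  rewrite ler_pM2l //.
  rewrite -(ler_pM2l bti).
  apply: (le_trans Q3).
  have -> : w j.+1 - wb = - (wb - w j.+1) by rewrite opprB.
  by rewrite ipNr mulrN mulNr.
have Q4 := grad_ineq h_convex h_diff h_grad (x j.+1) xb.
have IX := @golden_id _ _ psi (x j.+2) (z j.+2) xb hpsi1.
rewrite -hzk2 in IX.
have I2 := three_point (x j.+1) (z j.+2) (x j.+2).
have IY : ip (y j.+1) (appK K (xb - x j.+2)) + ip (y j) (appK K (x j.+2 - x j.+1))
        + ip (y j.+1) (w j.+1 - wb) + ip yy (appK K (x j.+1) - w j.+1)
      = ip (yy - y j.+1) (appK K (x j.+1) - w j.+1)
        + ip (y j.+1 - y j) (appK K (x j.+1 - x j.+2)).
  rewrite !appKD !appKN hKxb !(ipDl, ipDr, ipNl, ipNr); ring.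
have ey : y j.+1 - y j = (beta * t1) *: (appK K (x j.+1) - w j.+1).
  by apply/rowP => i; rewrite hyk !mxE; ring.
have I3 := three_point (y j.+1) (y j) yy.
rewrite {1}ey ipZl in I3.
have IY2 : 2 * t1 * ip (yy - y j.+1) (appK K (x j.+1) - w j.+1) =
   beta^-1 * (ip (yy - y j) (yy - y j) - ip (yy - y j.+1) (yy - y j.+1)
              - ip (y j.+1 - y j) (y j.+1 - y j)).
  by rewrite -I3 ipC; field; rewrite gt_eqF.
have IH : ip (gh (x j.+1)) (xb - x j.+2) + ip (gh (x j)) (x j.+2 - x j.+1)
          - ip (gh (x j.+1)) (xb - x j.+1)
        = ip (gh (x j) - gh (x j.+1)) (x j.+2 - x j.+1).
  rewrite !(ipDl, ipDr, ipNl, ipNr); ring.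
have BH : 2 * t1 * ip (gh (x j) - gh (x j.+1)) (x j.+2 - x j.+1) <=
    mu' * (ip (x j.+1 - x j) (x j.+1 - x j) + ip (x j.+2 - x j.+1) (x j.+2 - x j.+1)).
  set e0 := enorm (x j.+1 - x j).
  set e := enorm (x j.+2 - x j.+1).
  set egh := enorm (gh (x j.+1) - gh (x j)).
  have e00 : 0 <= e0 by apply: enorm_ge0.
  have e_0 : 0 <= e by apply: enorm_ge0.
  have egh0 : 0 <= egh by apply: enorm_ge0.
  have hr : t1 * egh <= mu' * e0.
    apply: (ratio_bound (d := t0)) => //; first by rewrite mulr_ge0 // ltW.
    by rewrite htauk; apply: min3_le3.
  have hcs : ip (gh (x j) - gh (x j.+1)) (x j.+2 - x j.+1) <= egh * e.
    by rewrite /egh enormB; apply: cauchy_schwarz.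
  have s1 : t1 * ip (gh (x j) - gh (x j.+1)) (x j.+2 - x j.+1) <= t1 * (egh * e).
    by rewrite ler_pM2l.
  have s2 : t1 * egh * e <= mu' * e0 * e by rewrite ler_wpM2r.
  have s3 := mulr_ge0 (ltW mu'0) (sqr_ge0 (e0 - e)).
  rewrite -!enorm2 -/e0 -/e.
  rewrite mulrA in s1.
  nra.
have BK : 2 * t1 * ip (y j.+1 - y j) (appK K (x j.+1 - x j.+2)) <=
    beta^-1 * ip (y j.+1 - y j) (y j.+1 - y j)
    + (t1 / t2) ^+ 2 * mu ^+ 2 * ip (x j.+2 - x j.+1) (x j.+2 - x j.+1).
  set e := enorm (x j.+2 - x j.+1).
  set eK := enorm (appK K (x j.+2) - appK K (x j.+1)).
  set edy := enorm (y j.+1 - y j).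
  have e_0 : 0 <= e by apply: enorm_ge0.
  have eK0 : 0 <= eK by apply: enorm_ge0.
  have edy0 : 0 <= edy by apply: enorm_ge0.
  have hr : t2 * (sb * eK) <= mu * e.
    apply: (ratio_bound (d := t1)) => //; first by rewrite mulr_ge0 // ltW.
      by rewrite htauk1; apply: min3_le2.
    by rewrite mulr_ge0 // ltW.
  have hcs : ip (y j.+1 - y j) (appK K (x j.+1 - x j.+2)) <= edy * eK.
    rewrite /eK appKD appKN enormB; apply: cauchy_schwarz.
  set r := t1 / t2.
  have r0 : 0 <= r by rewrite divr_ge0 // ltW.
  set q := edy / sb.
  have q0 : 0 <= q by rewrite divr_ge0 // ltW.
  have u1 : t1 * (edy * eK) = r * q * (t2 * (sb * eK)).
    by rewrite /r /q; field; rewrite !gt_eqF.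
  have s1 : t1 * ip (y j.+1 - y j) (appK K (x j.+1 - x j.+2)) <= t1 * (edy * eK).
    by rewrite ler_pM2l.
  have s2 : r * q * (t2 * (sb * eK)) <= r * q * (mu * e).
    by rewrite ler_wpM2l // mulr_ge0.
  have s3 := sqr_ge0 (q - r * mu * e).
  have hq : q ^+ 2 = beta^-1 * edy ^+ 2.
    by rewrite /q -sb2; field; rewrite gt_eqF.
  rewrite -!enorm2 -/e -/edy.
  nra.
have t10le : t1 <= t0 by apply: (hmono j.+1).
have th1 : t1 / t0 <= 1 by rewrite ler_pdivrMr // mul1r.
have th0 : 0 <= t1 / t0 by rewrite divr_ge0 // ltW.
have C1 : 0 <= (1 + psi^-1 - psi * (t1 / t0)) * ip (x j.+2 - z j.+2) (x j.+2 - z j.+2).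
  apply: mulr_ge0; last by apply: ip_ge0.
  have h1 : psi <= 1 + psi^-1.
    have pv : psi * psi^-1 = 1 by rewrite mulfV // gt_eqF.
    rewrite -(ler_pM2l psi0) mulrDr mulr1 pv; nra.
  have h2 : psi * (t1 / t0) <= psi by rewrite ler_piMr // ltW.
  lra.
have hA : t0 <= (1 + eps) * t1 := hN j j.+1 hNj.
have hB : t1 <= (1 + eps) * t2 := hN j.+1 j.+2 (leqW hNj).
have eps0' : 0 < 1 + eps by lra.
have th2 : (1 + eps)^-1 <= t1 / t0.
  by rewrite ler_pdivlMr // ler_pdivrMl.
have r1 : t1 / t2 <= 1 + eps by rewrite ler_pdivrMr.
have r0 : 0 <= t1 / t2 by rewrite divr_ge0 // ltW.
have C2 : (2 * mu' + (t1 / t2) ^+ 2 * mu ^+ 2) * ip (x j.+2 - x j.+1) (x j.+2 - x j.+1)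
          <= psi * (t1 / t0) * ip (x j.+2 - x j.+1) (x j.+2 - x j.+1).
  apply: ler_wpM2r; first by apply: ip_ge0.
  have h1 : (t1 / t2) ^+ 2 <= (1 + eps) ^+ 2 by rewrite lerXn2r // ?nnegrE // ltW.
  have h2 : 2 * mu' + (1 + eps) ^+ 2 * mu ^+ 2 <= psi / (1 + eps).
    by rewrite ler_pdivlMr // mulrC.
  have h3 : psi / (1 + eps) <= psi * (t1 / t0) by rewrite ler_pM2l.
  have h4 : (t1 / t2) ^+ 2 * mu ^+ 2 <= (1 + eps) ^+ 2 * mu ^+ 2.
    by rewrite ler_wpM2r // sqr_ge0.
  lra.
have hJ : Jfun f h K g xb wb (x j.+1) (w j.+1) yy =
   (F0 + h (x j.+1) + G + ip yy (appK K (x j.+1) - w j.+1) - (Fb + h xb + Gb))%:E.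
  by rewrite /Jfun /Phi hF0 hG hFb hGb.
rewrite hJ -EFinM -EFinD lee_fin.
rewrite (enormB (x j.+1) (x j.+2)) !enorm2.
have Q2' : t1 * (F0 - F1) <= psi * (t1 / t0) * ip (x j.+1 - z j.+2) (x j.+2 - x j.+1)
     + t1 * ip (y j) (appK K (x j.+2 - x j.+1)) + t1 * ip (gh (x j)) (x j.+2 - x j.+1).
  have -> : t1 * (F0 - F1) = (t1 / t0) * (t0 * (F0 - F1)) by field; rewrite gt_eqF.
  have -> : psi * (t1 / t0) * ip (x j.+1 - z j.+2) (x j.+2 - x j.+1)
     + t1 * ip (y j) (appK K (x j.+2 - x j.+1)) + t1 * ip (gh (x j)) (x j.+2 - x j.+1)
     = (t1 / t0) * (psi * ip (x j.+1 - z j.+2) (x j.+2 - x j.+1)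
     + t0 * ip (y j) (appK K (x j.+2 - x j.+1)) + t0 * ip (gh (x j)) (x j.+2 - x j.+1)).
    by field; rewrite gt_eqF.
  by rewrite ler_wpM2l.
have I2' := congr1 (fun v => psi * (t1 / t0) * v) I2.
have IY' := congr1 (fun v => t1 * v) IY.
have IH' := congr1 (fun v => t1 * v) IH.
have Q4' : t1 * (h (x j.+1) - h xb) <= - (t1 * ip (gh (x j.+1)) (xb - x j.+1)).
  by rewrite -mulrN ler_pM2l // lerNr opprB.
rewrite /= in I2' IY' IH'.
lra.
Qed.
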